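(* Let $Z\subseteq\{0,1\}^n$ be nonempty and $\bm a,\bm c\in\mathbb R^n$. The problem $$\text{(I)}\quad \min\ \bm a^\top\bm x+\bm c^\top\bm z\ \ \text{s.t.}\ \ \|\bm x\|_2^2\le1,\ x_i(1-z_i)=0\ (i=1,\dots,n),\ \bm x\in\mathbb R^n,\ \bm z\in Z$$ is equivalent to the problem $$\text{(II)}\quad \min\ \bm a^\top\bm x+\bm c^\top\bm z\ \ \text{s.t.}\ \ (\bm x,\bm z)\in P(\bm a),$$ in the sense that (I) and (II) have the same optimal objective value and there exists an optimal solution of (II) that is also optimal for (I).
   Context: For $\bm\alpha\in\mathbb R^n$, $P_0(\bm\alpha)=\{(\bm x,\bm z)\in\mathbb R^n\times Z:\ \sum_{i=1}^n|\alpha_ix_i|\le\sqrt{\sum_{i=1}^n\alpha_i^2z_i}\}$ and $P(\bm\alpha)=\operatorname{conv}(P_0(\bm\alpha))$, the convex hull. *)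

(* Defs.v *)
From HB Require Import structures.
From mathcomp Require Import all_boot all_order all_algebra.
From mathcomp Require Import reals.
Set Implicit Arguments. Unset Strict Implicit. Unset Printing Implicit Defensive.
Import Order.TTheory GRing.Theory Num.Theory.
Local Open Scope ring_scope.

Definition dotv (R : realType) (n : nat) (a x : 'rV[R]_n) : R :=
  \sum_(i < n) a 0 i * x 0 i.

Definition P0 (R : realType) (n : nat) (Z : 'rV[R]_n -> Prop) (alpha : 'rV[R]_n)
  (x z : 'rV[R]_n) : Prop :=
  Z z /\
  \sum_(i < n) `|alpha 0 i * x 0 i| <= Num.sqrt (\sum_(i < n) alpha 0 i ^+ 2 * z 0 i).

Definition conv_hull (R : realType) (n : nat) (S : 'rV[R]_n -> 'rV[R]_n -> Prop)
  (x z : 'rV[R]_n) : Prop :=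
  exists (m : nat) (lam : 'I_m -> R) (xs zs : 'I_m -> 'rV[R]_n),
    (forall k, 0 <= lam k) /\ \sum_(k < m) lam k = 1 /\
    (forall k, S (xs k) (zs k)) /\
    x = \sum_(k < m) lam k *: xs k /\ z = \sum_(k < m) lam k *: zs k.

Definition Phull (R : realType) (n : nat) (Z : 'rV[R]_n -> Prop) (alpha : 'rV[R]_n) :=
  conv_hull (P0 Z alpha).

Definition feasI (R : realType) (n : nat) (Z : 'rV[R]_n -> Prop) (x z : 'rV[R]_n) : Prop :=
  Z z /\ \sum_(i < n) x 0 i ^+ 2 <= 1 /\ (forall i, x 0 i * (1 - z 0 i) = 0).

(* Main.v *)
Require Import Defs.
From HB Require Import structures.
From mathcomp Require Import all_boot all_order all_algebra.
From mathcomp Require Import reals.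
From mathcomp Require Import ring lra.
From Stdlib Require Import Classical.
Import Order.TTheory GRing.Theory Num.Theory.
Local Open Scope ring_scope.
Set Implicit Arguments. Unset Strict Implicit.

Section Aux.
Variable R : realType.

Lemma ex_min_seq (T : eqType) (P : T -> Prop) (g : T -> R) (s : seq T) :
  (exists t, t \in s /\ P t) ->
  exists t, P t /\ forall u, u \in s -> P u -> g t <= g u.
Proof.
elim: s => [|x s IH] [t [ts Pt]]; first by rewrite in_nil in ts.
case: (classic (exists t, t \in s /\ P t)) => [H|H].
  have [t' [Pt' mt']] := IH H.
  case: (classic (P x)) => Px.
    have [le|lt] := leP (g x) (g t').
      exists x; split => // u; rewrite in_cons => /orP [/eqP->|us] Pu //.
      exact: le_trans le (mt' u us Pu).
    exists t'; split => // u; rewrite in_cons => /orP [/eqP->|us] Pu.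
      exact: ltW.
    exact: mt'.
  exists t'; split => // u; rewrite in_cons => /orP [/eqP->|us] Pu //.
  exact: mt'.
have tx : t = x.
  move: ts; rewrite in_cons => /orP [/eqP //|ts]; exfalso; apply: H; by exists t.
subst t; exists x; split => // u; rewrite in_cons => /orP [/eqP->|us] Pu //.
exfalso; apply: H; by exists u.
Qed.

Lemma ex_minT (T : finType) (P : T -> Prop) (g : T -> R) :
  (exists t, P t) -> exists t, P t /\ forall u, P u -> g t <= g u.
Proof.
move=> [t Pt].
have [t0 [P0 m0]] := @ex_min_seq T P g (enum T) (ex_intro _ t (conj (mem_enum T t) Pt)).
exists t0; split => // u Pu; apply: m0 => //; exact: mem_enum.
Qed.

Lemma nabs_le (x : R) : - `|x| <= x.
Proof. by have := lexx `|x|; rewrite ler_norml => /andP []. Qed.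

Lemma dotv_comb n m (a : 'rV[R]_n) (lam : 'I_m -> R) (v : 'I_m -> 'rV[R]_n) :
  dotv a (\sum_(k < m) lam k *: v k) = \sum_(k < m) lam k * dotv a (v k).
Proof.
rewrite /dotv.
under eq_bigr => i _ do rewrite summxE mulr_sumr.
rewrite exchange_big /=; apply: eq_bigr => k _; rewrite mulr_sumr.
by apply: eq_bigr => i _; rewrite mxE mulrCA.
Qed.

End Aux.
Section Main.
Variables (R : realType) (n : nat) (a : 'rV[R]_n).

Definition binr (z : 'rV[R]_n) := forall i, z 0 i = 0 \/ z 0 i = 1.
Definition Asum (z : 'rV[R]_n) := \sum_(i < n) a 0 i ^+ 2 * z 0 i.
Definition sq (z : 'rV[R]_n) := Num.sqrt (Asum z).
Definition xstar (z : 'rV[R]_n) : 'rV[R]_n :=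
  (- (sq z)^-1) *: \row_i (a 0 i * z 0 i).

Lemma Asum_ge0 z : binr z -> 0 <= Asum z.
Proof.
move=> bz; apply: sumr_ge0 => i _; case: (bz i) => ->; rewrite ?mulr0 ?mulr1 //.
exact: sqr_ge0.
Qed.

Lemma sq_sqr z : binr z -> sq z ^+ 2 = Asum z.
Proof. by move=> bz; rewrite /sq sqr_sqrtr // Asum_ge0. Qed.

Lemma sq_ge0 z : 0 <= sq z.
Proof. exact: sqrtr_ge0. Qed.

Lemma inv_sq z : binr z -> (sq z)^-1 * Asum z = sq z.
Proof.
move=> bz; rewrite -sq_sqr //; have [->|nz] := eqVneq (sq z) 0.
  by rewrite invr0 mul0r.
by rewrite expr2 mulrA mulVf // mul1r.
Qed.

Lemma xstarE z i : xstar z 0 i = - (sq z)^-1 * (a 0 i * z 0 i).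
Proof. by rewrite /xstar !mxE. Qed.

Lemma dot_xstar z : binr z -> dotv a (xstar z) = - sq z.
Proof.
move=> bz; rewrite /dotv.
under eq_bigr => i _ do rewrite xstarE.
transitivity (- ((sq z)^-1 * Asum z)); last by rewrite inv_sq.
rewrite /Asum mulr_sumr -sumrN; apply: eq_bigr => i _; ring.
Qed.

Lemma xstar_norm z : binr z -> \sum_(i < n) xstar z 0 i ^+ 2 <= 1.
Proof.
move=> bz.
have -> : \sum_(i < n) xstar z 0 i ^+ 2 = (sq z)^-1 * ((sq z)^-1 * Asum z).
  rewrite /Asum !mulr_sumr; apply: eq_bigr => i _; rewrite xstarE.
  case: (bz i) => ->; ring.
rewrite inv_sq //; have [->|nz] := eqVneq (sq z) 0; first by rewrite invr0 mul0r.
by rewrite mulVf.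
Qed.

Lemma xstar_supp z : binr z -> forall i, xstar z 0 i * (1 - z 0 i) = 0.
Proof. by move=> bz i; rewrite xstarE; case: (bz i) => ->; ring. Qed.

Lemma xstar_P0 z : binr z -> \sum_(i < n) `|a 0 i * xstar z 0 i| <= sq z.
Proof.
move=> bz.
have -> : \sum_(i < n) `|a 0 i * xstar z 0 i| = (sq z)^-1 * Asum z.
  rewrite /Asum mulr_sumr; apply: eq_bigr => i _; rewrite xstarE.
  have h0 : 0 <= (sq z)^-1 by rewrite invr_ge0 sq_ge0.
  case: (bz i) => ->; rewrite ?mulr0 ?normr0 //.
  rewrite !mulr1; have -> : a 0 i * (- (sq z)^-1 * a 0 i) = - ((sq z)^-1 * a 0 i ^+ 2) by ring.
  by rewrite normrN ger0_norm // mulr_ge0 // sqr_ge0.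
by rewrite inv_sq.
Qed.

Lemma lower_P0 (x z : 'rV[R]_n) : \sum_(i < n) `|a 0 i * x 0 i| <= sq z -> - sq z <= dotv a x.
Proof.
move=> h; apply: (le_trans (y := - \sum_(i < n) `|a 0 i * x 0 i|)).
  by rewrite lerN2.
rewrite /dotv -sumrN; apply: ler_sum => i _.
by have := lexx `|a 0 i * x 0 i|; rewrite ler_norml => /andP [].
Qed.

Lemma feas_P0 (x z : 'rV[R]_n) : binr z -> \sum_(i < n) x 0 i ^+ 2 <= 1 ->
  (forall i, x 0 i * (1 - z 0 i) = 0) ->
  \sum_(i < n) `|a 0 i * x 0 i| <= sq z.
Proof.
move=> bz hX hs.
pose u i := `|a 0 i * z 0 i|. pose v i := `|x 0 i|.
have e1 : \sum_(i < n) `|a 0 i * x 0 i| = \sum_(i < n) u i * v i.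
  apply: eq_bigr => i _; rewrite /u /v -normrM.
  have := hs i; case: (bz i) => ->; rewrite ?mulr1 //.
  by rewrite subr0 mulr1 => ->; rewrite !mulr0.
have e2 : Asum z = \sum_(i < n) u i ^+ 2.
  apply: eq_bigr => i _; rewrite /u real_normK ?num_real //.
  by case: (bz i) => ->; ring.
have e3 : \sum_(i < n) x 0 i ^+ 2 = \sum_(i < n) v i ^+ 2.
  by apply: eq_bigr => i _; rewrite /v real_normK ?num_real.
rewrite e1.
have [s0|spos] := eqVneq (sq z) 0.
  have : Asum z == 0 by rewrite -sq_sqr // s0 expr0n.
  rewrite e2 psumr_eq0; last by move=> i _; exact: sqr_ge0.
  move=> /allP hu; rewrite s0 big1 // => i _.
  have /implyP := hu i (mem_index_enum i); rewrite sqrf_eq0 => /(_ isT) /eqP ->.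
  by rewrite mul0r.
have sp : 0 < sq z by rewrite lt_def spos sq_ge0.
set s := sq z in sp spos *.
have H : 2 * s * (\sum_(i < n) u i * v i) <=
         \sum_(i < n) u i ^+ 2 + s ^+ 2 * \sum_(i < n) v i ^+ 2.
  rewrite !mulr_sumr -big_split /=; apply: ler_sum => i _.
  have := sqr_ge0 (u i - s * v i); rewrite -subr_ge0; lra.
rewrite -e2 -e3 -sq_sqr // -/s in H.
nra.
Qed.

End Main.

Section Rows.
Variables (R : realType) (n : nat).
Definition rowof (b : {ffun 'I_n -> bool}) : 'rV[R]_n := \row_i ((b i)%:R : R).
Definition tob (z : 'rV[R]_n) : {ffun 'I_n -> bool} := [ffun i => z 0 i == 1].
Lemma rowof_tob z : binr z -> rowof (tob z) = z.
Proof.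
move=> bz; apply/rowP => i; rewrite !mxE ffunE.
by case: (bz i) => ->; rewrite ?eqxx // eq_sym oner_eq0.
Qed.
End Rows.

Unset Implicit Arguments.

Theorem proposition3 (R : realType) (n : nat) (Z : 'rV[R]_n -> Prop)
  (a c : 'rV[R]_n) :
  (forall z, Z z -> forall i, z 0 i = 0 \/ z 0 i = 1) ->
  (exists z, Z z) ->
  exists x z : 'rV[R]_n,
    (* (x,z) is optimal for (II) *)
    (Phull Z a x z /\
     forall x' z', Phull Z a x' z' -> dotv a x + dotv c z <= dotv a x' + dotv c z') /\
    (* (x,z) is optimal for (I) *)
    (feasI Z x z /\
     forall x' z', feasI Z x' z' -> dotv a x + dotv c z <= dotv a x' + dotv c z').
Proof.
move=> hbin [z0 Z0].
pose f (z : 'rV[R]_n) := dotv c z - sq a z.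
have [b [Pb mb]] := @ex_minT R _ (fun b => Z (rowof R b)) (fun b => f (rowof R b))
  (ex_intro _ (tob z0) (eq_ind_r Z Z0 (rowof_tob (hbin z0 Z0)))).
set zs := rowof R b in Pb mb.
have bz : binr zs := hbin zs Pb.
have fmin : forall z, Z z -> f zs <= f z.
  move=> z Zz; rewrite -(rowof_tob (hbin z Zz)); apply: mb.
  by rewrite rowof_tob //; exact: hbin.
have low : forall x z : 'rV[R]_n, Z z -> \sum_(i < n) `|a 0 i * x 0 i| <= sq a z ->
    f zs <= dotv a x + dotv c z.
  move=> x z Zz h; apply: (le_trans (fmin z Zz)); rewrite /f.
  by have := lower_P0 h; lra.
have obj : dotv a (xstar a zs) + dotv c zs = f zs by rewrite dot_xstar // /f; lra.
exists (xstar a zs), zs; rewrite obj; split; split.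
- exists 1%N, (fun _ => 1), (fun _ => xstar a zs), (fun _ => zs).
  by rewrite !big_ord1 !scale1r; do !split => //; exact: xstar_P0.
- move=> x' z' [m [lam [xs [zs' [hl [hs [hP [-> ->]]]]]]]].
  rewrite !dotv_comb -big_split /= -[f zs]mul1r -hs mulr_suml.
  apply: ler_sum => k _; rewrite -mulrDr; apply: ler_wpM2l => //.
  by have [Zk hk] := hP k; exact: low.
- by split => //; split; [exact: xstar_norm | exact: xstar_supp].
- move=> x' z' [Zz [hX hs]]; apply: low => //.
  exact: feas_P0 (hbin z' Zz) hX hs.
Qed.
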